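(* Let $N\ge 1$, $1<a_1<\cdots<a_N$, $\mathbf a=(a_1,\dots,a_N)$. If $f\in C^{(k)}(\mathbb{R})$ satisfies $f(x)+f(a_1x)+\cdots+f(a_Nx)=0$ for all $x\in\mathbb{R}$ and $k\ge m(\mathbf{a})$, then $f\equiv 0$. In particular, $f\equiv0$ is the only $C^\infty(\mathbb{R})$ function satisfying this equation for all real $x$.
   Context: With $a_0=1$, $m(\mathbf{a})=\min\{m\in\mathbb{N}: \sum_{k=0}^{N-1}(a_k/a_N)^m<1\}$. *)

(* Defs.v *)
From Stdlib Require Export Reals.
Open Scope R_scope.

Definition Ck (k : nat) (f : R -> R) : Prop :=
  exists g : nat -> R -> R,
    g 0%nat = f /\
    (forall i : nat, (i < k)%nat ->
       forall x : R, derivable_pt_lim (g i) x (g (S i) x)) /\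
    continuity (g k).

Definition Cinf (f : R -> R) : Prop := forall k : nat, Ck k f.

(** The sum  sum_{j=0}^{N-1} (a_j / a_N)^m  (with a_0 = 1). *)
Definition ratio_sum (a : nat -> R) (N m : nat) : R :=
  sum_f_R0 (fun j => (a j / a N) ^ m) (N - 1).

Definition is_m (a : nat -> R) (N m : nat) : Prop :=
  ratio_sum a N m < 1 /\ (forall m' : nat, ratio_sum a N m' < 1 -> (m <= m')%nat).

(* Main.v *)
Require Import Defs.
From Stdlib Require Import Reals Lra Lia Psatz FunctionalExtensionality.
Open Scope R_scope.

Lemma dlin c b h h' x : derivable_pt_lim h (b*x) h' ->
  derivable_pt_lim (fun y => c * h (b*y)) x (c * b * h').
Proof.
  intro H.
  assert (H1 : derivable_pt_lim (fun y => b*y) x (b*1)).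
  { exact (derivable_pt_lim_scal id b x 1 (derivable_pt_lim_id x)). }
  assert (H2 := derivable_pt_lim_comp (fun y => b*y) h x _ _ H1 H).
  assert (H3 := derivable_pt_lim_scal _ c x _ H2).
  replace (c*b*h') with (c*(h'*(b*1))) by ring. exact H3.
Qed.

Lemma dsum (b : nat -> R) i h h' : (forall y, derivable_pt_lim h y (h' y)) ->
  forall n x, derivable_pt_lim (fun y => sum_f_R0 (fun l => b l ^ i * h (b l * y)) n) x
    (sum_f_R0 (fun l => b l ^ S i * h' (b l * x)) n).
Proof.
  intros H n. induction n as [|n IH]; intro x.
  - cbn [sum_f_R0].
    replace (b 0%nat ^ S i * h' (b 0%nat * x)) with (b 0%nat ^ i * b 0%nat * h' (b 0%nat * x)) by (simpl; ring).
    apply dlin. apply H.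
  - change (derivable_pt_lim (plus_fct (fun y => sum_f_R0 (fun l => b l ^ i * h (b l * y)) n)
       (fun y => b (S n) ^ i * h (b (S n) * y))) x
       (sum_f_R0 (fun l => b l ^ S i * h' (b l * x)) n + b (S n) ^ S i * h' (b (S n) * x))).
    apply derivable_pt_lim_plus; [apply IH|].
    replace (b (S n) ^ S i * h' (b (S n) * x)) with (b (S n) ^ i * b (S n) * h' (b (S n) * x)) by (simpl; ring).
    apply dlin. apply H.
Qed.

Lemma sum_pos (c : nat -> R) n : (forall l, (l <= n)%nat -> 0 < c l) -> 0 < sum_f_R0 c n.
Proof.
  induction n as [|n IH]; intro H; cbn [sum_f_R0].
  - apply H; lia.
  - assert (0 < c (S n)) by (apply H; lia).
    assert (0 < sum_f_R0 c n) by (apply IH; intros; apply H; lia). lra.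
Qed.

Lemma core (N : nat) (a : nat -> R)
  (hN : (1 <= N)%nat)
  (ha0 : a 0%nat = 1)
  (hmono : forall i : nat, (i < N)%nat -> a i < a (S i))
  (m k : nat) (f : R -> R) :
  ratio_sum a N m < 1 -> (m <= k)%nat -> Ck k f ->
  (forall x : R, sum_f_R0 (fun i => f (a i * x)) N = 0) ->
  forall x : R, f x = 0.
Proof.
  intros Hr Hmk [g [g0 [gd gc]]] Hf.
  assert (Hle : forall j i, (i <= j <= N)%nat -> a i <= a j).
  { induction j as [|j IH]; intros i Hij.
    - replace i with 0%nat by lia. lra.
    - destruct (Nat.eq_dec i (S j)) as [->|Hne]; [lra|].
      assert (a i <= a j) by (apply IH; lia).
      assert (a j < a (S j)) by (apply hmono; lia). lra. }
  assert (Hpos : forall l, (l <= N)%nat -> 1 <= a l).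
  { intros l Hl. rewrite <- ha0. apply Hle; lia. }
  assert (Heq : forall i, (i <= k)%nat -> forall x,
            sum_f_R0 (fun l => a l ^ i * g i (a l * x)) N = 0).
  { induction i as [|i IH]; intros Hi x.
    - rewrite <- (Hf x). apply sum_eq. intros l _. rewrite g0. simpl. ring.
    - assert (D := dsum a i (g i) (g (S i)) (gd i ltac:(lia)) N x).
      assert (E : (fun y => sum_f_R0 (fun l => a l ^ i * g i (a l * y)) N) = fct_cte 0).
      { apply functional_extensionality. intro y. apply IH. lia. }
      rewrite E in D.
      exact (uniqueness_limite _ _ _ _ D (derivable_pt_lim_const 0 x)). }
  assert (H0 : forall i, (i <= k)%nat -> g i 0 = 0).
  { intros i Hi. assert (Z := Heq i Hi 0).
    rewrite (sum_eq _ (fun l => a l ^ i * g i 0)) in Z.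
    2:{ intros l _. rewrite Rmult_0_r. reflexivity. }
    rewrite <- scal_sum in Z.
    assert (P : 0 < sum_f_R0 (fun l => a l ^ i) N).
    { apply sum_pos. intros l Hl. apply pow_lt. assert (1 <= a l) by (apply Hpos; lia). lra. }
    destruct (Rmult_integral _ _ Z) as [Z'|Z']; [exact Z'|lra]. }
  assert (Gc : continuity (g m)).
  { destruct (Nat.eq_dec m k) as [->|Hne]; [exact gc|].
    intro x. apply derivable_continuous_pt. exact (exist _ _ (gd m ltac:(lia) x)). }
  destruct N as [|n]; [lia|].
  assert (HaN : 1 <= (a (S n))) by (apply Hpos; lia).
  assert (PN : 0 < (a (S n)) ^ m) by (apply pow_lt; lra).
  assert (Hrs : sum_f_R0 (fun l => a l ^ m) n < (a (S n)) ^ m).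
  { unfold ratio_sum in Hr. replace (S n - 1)%nat with n in Hr by lia.
    assert (E : sum_f_R0 (fun l => a l ^ m) n = (a (S n)) ^ m * sum_f_R0 (fun j => (a j / a (S n)) ^ m) n).
    { rewrite scal_sum. apply sum_eq. intros l _.
      rewrite <- Rpow_mult_distr. replace (a l / a (S n) * (a (S n))) with (a l) by (field; lra). reflexivity. }
        rewrite E. nra. }
  assert (Gm : forall x, g m x = 0).
  { intro x. set (r := Rabs x).
    assert (Hr0 : 0 <= r) by apply Rabs_pos.
    destruct (continuity_ab_maj (fun y => Rabs (g m y)) (-r) r ltac:(lra)) as [y0 [Hmax Hy0]].
    { intros c _. apply continuity_pt_comp with (f1 := g m) (f2 := Rabs); [apply Gc|apply Rcontinuity_abs]. }
    set (M := Rabs (g m y0)) in *.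
    assert (HM : 0 <= M) by apply Rabs_pos.
    assert (Z := Heq m Hmk (y0 / (a (S n)))).
    rewrite tech5 in Z.
    replace ((a (S n)) * (y0 / (a (S n)))) with y0 in Z by (field; lra).
    assert (Hb : M * (a (S n)) ^ m <= M * sum_f_R0 (fun l => a l ^ m) n).
    { replace (M * (a (S n)) ^ m) with (Rabs (sum_f_R0 (fun l => a l ^ m * g m (a l * (y0 / (a (S n))))) n)).
      2:{ replace (sum_f_R0 (fun l => a l ^ m * g m (a l * (y0 / (a (S n))))) n) with (- ((a (S n)) ^ m * g m y0)) by lra.
          rewrite Rabs_Ropp, Rabs_mult, (Rabs_right ((a (S n)) ^ m)) by lra. unfold M. ring. }
      eapply Rle_trans; [apply sum_f_R0_triangle|].
      rewrite scal_sum. apply sum_Rle. intros l Hl.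
      assert (1 <= a l) by (apply Hpos; lia).
      assert (a l <= (a (S n))) by (apply Hle; lia).
      rewrite Rabs_mult, (Rabs_right (a l ^ m)) by (left; apply pow_lt; lra).
      apply Rmult_le_compat_l; [apply pow_le; lra|].
      apply (Hmax (a l * (y0 / (a (S n))))).
      set (t := a l / (a (S n))).
      assert (0 <= t <= 1).
      { unfold t; split. unfold Rdiv; apply Rmult_le_pos; [lra|left; apply Rinv_0_lt_compat; lra].
        apply (Rmult_le_reg_r (a (S n))); [lra|]. unfold Rdiv. rewrite Rmult_assoc, Rinv_l by lra. lra. }
      replace (a l * (y0 / (a (S n)))) with (t * y0) by (unfold t; field; lra).
      split; nra. }
    assert (M = 0) by nra.
    assert (Hx : Rabs (g m x) <= M) by (apply (Hmax x); unfold r; split; [pose proof (Rle_abs (-x)); rewrite Rabs_Ropp in *; lra | apply Rle_abs]).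
    assert (Rabs (g m x) = 0) by (pose proof (Rabs_pos (g m x)); lra).
    destruct (Req_dec (g m x) 0) as [?|Hne]; [assumption|]. exfalso. apply (Rabs_no_R0 _ Hne). assumption. }
  assert (Hdesc : forall j, (j <= m)%nat -> forall x, g (m - j)%nat x = 0).
  { induction j as [|j IH]; intros Hj x.
    - rewrite Nat.sub_0_r. apply Gm.
    - set (i := (m - S j)%nat).
      assert (Hi : (i < k)%nat) by (unfold i; lia).
      assert (Hs : forall y, g (S i) y = 0).
      { intro y. replace (S i) with (m - j)%nat by (unfold i; lia). apply IH; lia. }
      assert (C := null_derivative_1 (g i) (fun y => exist _ _ (gd i Hi y))
                     (fun y => Hs y)).
      rewrite (C x 0). apply H0. lia. }
  intro x. rewrite <- g0. replace 0%nat with (m - m)%nat by lia. apply Hdesc. lia.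
Qed.

Lemma ex_m (N : nat) (a : nat -> R)
  (hN : (1 <= N)%nat)
  (ha0 : a 0%nat = 1)
  (hmono : forall i : nat, (i < N)%nat -> a i < a (S i)) :
  exists m, ratio_sum a N m < 1.
Proof.
  assert (Hle : forall j i, (i <= j <= N)%nat -> a i <= a j).
  { induction j as [|j IH]; intros i Hij.
    - replace i with 0%nat by lia. lra.
    - destruct (Nat.eq_dec i (S j)) as [->|Hne]; [lra|].
      assert (a i <= a j) by (apply IH; lia).
      assert (a j < a (S j)) by (apply hmono; lia). lra. }
  assert (Hpos : forall l, (l <= N)%nat -> 1 <= a l).
  { intros l Hl. rewrite <- ha0. apply Hle; lia. }
  destruct N as [|n]; [lia|].
  assert (H1 : 1 <= a n) by (apply Hpos; lia).
  assert (H2 : a n < a (S n)) by (apply hmono; lia).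
  set (q := a n / a (S n)).
  assert (Hq : 0 <= q < 1).
  { unfold q; split.
    - unfold Rdiv; apply Rmult_le_pos; [lra|left; apply Rinv_0_lt_compat; lra].
    - apply (Rmult_lt_reg_r (a (S n))); [lra|]. unfold Rdiv. rewrite Rmult_assoc, Rinv_l by lra. lra. }
  assert (HN : 0 < INR (S n)) by (apply lt_0_INR; lia).
  destruct (pow_lt_1_zero q ltac:(rewrite Rabs_right; lra) (/ INR (S n)) ltac:(apply Rinv_0_lt_compat; lra)) as [m Hm].
  exists m. specialize (Hm m (le_n m)). rewrite Rabs_right in Hm by (apply Rle_ge, pow_le; lra).
  unfold ratio_sum. replace (S n - 1)%nat with n by lia.
  apply Rle_lt_trans with (sum_f_R0 (fun _ => q ^ m) n).
  - apply sum_Rle. intros l Hl. apply pow_incr. split.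
    + unfold Rdiv; apply Rmult_le_pos; [assert (1 <= a l) by (apply Hpos; lia); lra|left; apply Rinv_0_lt_compat; lra].
    + unfold q, Rdiv. apply Rmult_le_compat_r; [left; apply Rinv_0_lt_compat; lra|]. apply Hle; lia.
  - rewrite sum_cte.
    assert (q ^ m * INR (S n) < / INR (S n) * INR (S n)) by (apply Rmult_lt_compat_r; lra).
    rewrite Rinv_l in H by lra. lra.
Qed.

Theorem mainTheorem2 (N : nat) (a : nat -> R)
  (hN : (1 <= N)%nat)
  (ha0 : a 0%nat = 1)
  (hmono : forall i : nat, (i < N)%nat -> a i < a (S i)) :
  (forall (mA k : nat) (f : R -> R),
     is_m a N mA -> (mA <= k)%nat -> Ck k f ->
     (forall x : R, sum_f_R0 (fun i => f (a i * x)) N = 0) ->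
     forall x : R, f x = 0) /\
  (forall f : R -> R, Cinf f ->
     (forall x : R, sum_f_R0 (fun i => f (a i * x)) N = 0) ->
     forall x : R, f x = 0).
Proof.
  split.
  - intros mA k f [Hr _] Hk Hc Hf. exact (core N a hN ha0 hmono mA k f Hr Hk Hc Hf).
  - intros f Hc Hf. destruct (ex_m N a hN ha0 hmono) as [m Hm].
    exact (core N a hN ha0 hmono m m f Hm (le_n m) (Hc m) Hf).
Qed.
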